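(* Let $H:\mathcal P N\times Ł_1^S\to Ł_1$ be a playable Boolean effectivity function and let $n\ge1$. Define $E:\mathcal P N\times Ł_n^S\to Ł_n$ by $E(C,f)=\max\{\tfrac in\in Ł_n\mid H(C,\tau_{i/n}(f))=1\}$ (with $\tau_{0}(f)$ understood as the constant $1$, so the set is nonempty). Then $E$ is a playable $Ł_n$-valued effectivity function with $E^\sharp=H$. If moreover $H$ is truly playable, then $E$ is truly playable.
   Context: For a positive integer $n$ let $Ł_n=\{0,\frac1n,\dots,1\}$ with $\neg x=1-x$, $x\oplus y=\min(x+y,1)$, $x\odot y=\max(x+y-1,0)$, $\wedge=\min$, $\vee=\max$, applied pointwise on $Ł_n^S$; $0,1$ also denote constant functions; $Ł_1^S=\{0,1\}^S$. For $i\in\{1,\dots,n\}$, $\tau_{i/n}:Ł_n\to Ł_n$ is $\tau_{i/n}(x)=1$ if $x\ge i/n$ and $0$ otherwise, applied pointwise to functions. $E^\sharp$ is the restriction of $E$ to $\mathcal P N\times Ł_1^S$. Standing assumptions: $N$ finite, $|N|\ge2$, $|S|\ge2$; $\overline C=N\setminus C$. An $Ł_n$-valued effectivity function is any map $E:\mathcal P N\times Ł_n^S\to Ł_n$ (Boolean when $n=1$). It is: outcome monotonic if $f\ge g$ implies $E(C,f)\ge E(C,g)$; $N$-maximal if $\neg E(\varnothing,\neg f)\le E(N,f)$; superadditive if $E(C_1,f)\wedge E(C_2,g)\le E(C_1\cup C_2,f\wedge g)$ whenever $C_1\cap C_2=\varnothing$; homogeneous if $E(C,f\oplus f)=E(C,f)\oplus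 E(C,f)$ and $E(C,f\odot f)=E(C,f)\odot E(C,f)$; has liveness if $E(C,1)=1$ for all $C$; has safety if $E(C,0)=0$ for all $C$; principal if there is $g$ with $\{f\mid E(\varnothing,f)=1\}=\{f\mid f\ge g\odot\cdots\odot g\ (n\text{ factors})\}$. Playable: outcome monotonic, $N$-maximal, superadditive, homogeneous, liveness and safety; truly playable: playable and principal. *)

(* Defs.v *)
From mathcomp Require Import all_boot.
Set Implicit Arguments. Unset Strict Implicit. Unset Printing Implicit Defensive.

(* Ł_n = {0, 1/n, ..., 1}; the element i : 'I_n.+1 stands for i/n. *)
Definition L (n : nat) := 'I_n.+1.

Definition Lzero {n : nat} : L n := ord0.
Definition Lone {n : nat} : L n := ord_max.

Definition Lneg {n : nat} (x : L n) : L n := inord (n - x).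
Definition Loplus {n : nat} (x y : L n) : L n := inord (minn (x + y) n).
Definition Lodot {n : nat} (x y : L n) : L n := inord (x + y - n).
Definition Lmin {n : nat} (x y : L n) : L n := inord (minn x y).

Definition Lodot_pow {n : nat} (x : L n) : L n := iter n.-1 (Lodot x) x.

Definition EF (N : finType) (S : Type) (n : nat) := {set N} -> (S -> L n) -> L n.

Section Props.
Variables (N : finType) (S : Type) (n : nat) (E : EF N S n).

Definition outcome_monotonic :=
  forall C (f g : S -> L n), (forall s, g s <= f s) -> E C g <= E C f.

Definition N_maximal :=
  forall f : S -> L n, Lneg (E set0 (fun s => Lneg (f s))) <= E setT f.

Definition superadditive :=
  forall (C1 C2 : {set N}) (f g : S -> L n), [disjoint C1 & C2] ->
    Lmin (E C1 f) (E C2 g) <= E (C1 :|: C2) (fun s => Lmin (f s) (g s)).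

Definition homogeneous :=
  forall C (f : S -> L n),
    E C (fun s => Loplus (f s) (f s)) = Loplus (E C f) (E C f) /\
    E C (fun s => Lodot (f s) (f s)) = Lodot (E C f) (E C f).

Definition liveness := forall C, E C (fun _ => Lone) = Lone.
Definition safety := forall C, E C (fun _ => Lzero) = Lzero.

Definition principal :=
  exists g : S -> L n, forall f : S -> L n,
    E set0 f = Lone <-> (forall s, Lodot_pow (g s) <= f s).

Definition playable :=
  outcome_monotonic /\ N_maximal /\ superadditive /\ homogeneous /\
  liveness /\ safety.

Definition truly_playable := playable /\ principal.
End Props.

Definition emb1 (n : nat) (b : L 1) : L n := if val b == 1 then Lone else Lzero.

Definition sharp_eq (N : finType) (S : Type) (n : nat) (E : EF N S n) (H : EF N S 1) :=
  forall (C : {set N}) (f : S -> L 1),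
    E C (fun s => emb1 n (f s)) = emb1 n (H C f).

(* τ_{i/n}(f) as a Boolean function; for i = 0 it is the constant 1. *)
Definition tau (S : Type) (n : nat) (i : nat) (f : S -> L n) : S -> L 1 :=
  fun s => if i <= f s then Lone else Lzero.

Definition liftEF (N : finType) (S : Type) (n : nat) (H : EF N S 1) : EF N S n :=
  fun C f => inord (\max_(i < n.+1 | H C (tau i f) == Lone) (val i)).
Arguments liftEF {N S} n H.

(* Main.v *)
Require Import Defs.
From mathcomp Require Import all_boot.
From mathcomp Require Import zify.

Lemma L1_cases (x : L 1) : (x : nat) = 0 \/ (x : nat) = 1.
Proof. have := ltn_ord x. lia. Qed.

Lemma val_Lone n : (@Lone n : nat) = n. Proof. by []. Qed.
Lemma val_Lzero n : (@Lzero n : nat) = 0. Proof. by []. Qed.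

Lemma H_ext (N : finType) (S : Type) (H : EF N S 1) :
  outcome_monotonic H -> forall C (f g : S -> L 1),
  (forall s, f s = g s) -> H C f = H C g.
Proof.
move=> Hm C f g e; apply: val_inj; apply/eqP; rewrite eqn_leq.
by rewrite !Hm // => s; rewrite e.
Qed.

Lemma eqLone1 (x : L 1) : (x == Lone) = (0 < (x : nat)).
Proof.
apply/eqP/idP => [->//|h]; apply: val_inj => /=.
have := ltn_ord x; lia.
Qed.

Lemma hmono (N : finType) (S : Type) (n : nat) (H : EF N S 1) :
  outcome_monotonic H -> forall C (f : S -> L n) i j, i <= j ->
  H C (tau j f) == Lone -> H C (tau i f) == Lone.
Proof.
move=> Hm C f i j ij; rewrite !eqLone1 => h.
apply: (leq_trans h); apply: Hm => s; rewrite /tau.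
case: ifP => a; case: ifP => b //.
by move: a b => a; rewrite (leq_trans ij a).
Qed.

Lemma liftE_le (N : finType) (S : Type) (n : nat) (H : EF N S 1) C f :
  (liftEF n H C f : nat) <= n.
Proof.
have hb : \max_(i < n.+1 | H C (tau i f) == Lone) (i : nat) <= n.
  by apply/bigmax_leqP => i _; rewrite -ltnS.
by rewrite /liftEF inordK.
Qed.

Lemma spec (N : finType) (S : Type) (n : nat) (H : EF N S 1) :
  outcome_monotonic H -> liveness H -> forall C (f : S -> L n) i, i <= n ->
  (i <= (liftEF n H C f : nat)) = (H C (tau i f) == Lone).
Proof.
move=> Hm Hl C f i iln.
have hb : \max_(i < n.+1 | H C (tau i f) == Lone) (i : nat) <= n.
  by apply/bigmax_leqP => j _; rewrite -ltnS.
rewrite /liftEF inordK //.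
apply/idP/idP => h; last first.
  have := @leq_bigmax_cond _ (fun j : 'I_n.+1 => H C (tau j f) == Lone) val (Ordinal (n:=n.+1) (m:=i) iln).
  by apply.
apply/negP => /negP hn.
case: i iln h hn => [|i] iln h hn.
  have e : H C (tau 0 f) = H C (fun _ => Lone) by apply: H_ext.
  by move: hn; rewrite e (Hl C) eqxx.
have : \max_(j < n.+1 | H C (tau j f) == Lone) val j <= i.
  apply/bigmax_leqP => j hj; rewrite leqNgt; apply/negP => ij.
  by move: hn; rewrite (@hmono _ _ _ _ Hm _ _ _ _ ij hj).
by move=> h2; move: (leq_trans h h2); rewrite ltnn.
Qed.

Lemma key (N : finType) (S : Type) (n : nat) (H : EF N S 1) :
  outcome_monotonic H -> liveness H -> forall C (f g : S -> L n) i j,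
  i <= n -> j <= n -> (forall s, (i <= g s) = (j <= f s)) ->
  (i <= (liftEF n H C g : nat)) = (j <= (liftEF n H C f : nat)).
Proof.
move=> Hm Hl C f g i j hi hj e.
rewrite (@spec _ _ _ _ Hm Hl) // (@spec _ _ _ _ Hm Hl) //.
by rewrite (@H_ext _ _ _ Hm C _ (tau j f)) // => s; rewrite /tau e.
Qed.

Lemma eq_from_le n (a b : nat) : a <= n -> b <= n ->
  (forall i, i <= n -> (i <= a) = (i <= b)) -> a = b.
Proof.
move=> ha hb e; apply/eqP; rewrite eqn_leq.
by rewrite -e // leqnn /= e // leqnn.
Qed.

Lemma Lodot_pow_emb n b : (Lodot_pow (emb1 n b) : nat) = emb1 n b.
Proof.
rewrite /Lodot_pow; elim: n.-1 => [//|k IH].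
rewrite iterS [Lodot _ (iter _ _ _)]/Lodot inordK; last first.
  have := ltn_ord (emb1 n b); have := ltn_ord (iter k (Lodot (emb1 n b)) (emb1 n b)); lia.
rewrite IH /emb1; case: ifP => _ /=; lia.
Qed.

Theorem mainTheorem4 (N : finType) (S : Type) (n : nat) (H : EF N S 1) :
  1 < #|N| -> (exists s1 s2 : S, s1 <> s2) -> 1 <= n ->
  playable H ->
  playable (liftEF n H) /\ sharp_eq (liftEF n H) H /\
  (truly_playable H -> truly_playable (liftEF n H)).
Proof.
move=> _ _ n1 [Hm [Hmax [Hsup [_ [Hl Hs]]]]].
have sp := @spec _ _ _ _ Hm Hl.
have le := @liftE_le _ _ n H.
have kk := @key _ _ _ _ Hm Hl.
have ordle : forall x : L n, (x : nat) <= n by move=> x; rewrite -ltnS.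
have PL : playable (liftEF n H).
  split.
    move=> C f g fg.
    rewrite sp //.
    have hg : H C (tau (liftEF n H C g) g) == Lone by rewrite -sp.
    move: hg; rewrite !eqLone1 => hg; apply: (leq_trans hg); apply: Hm => s.
    rewrite /tau; case: ifP => a; case: ifP => b //.
    by move: b; rewrite (leq_trans a (fg s)).
  split.
    move=> f; set k := liftEF n H set0 _.
    rewrite /Lneg inordK; last by have := le set0 (fun s => Lneg (f s)); lia.
    case: (ltnP k n) => hk; last by rewrite (_ : n - k = 0) //; lia.
    have hn : ~~ (k.+1 <= k) by rewrite ltnn.
    rewrite {2}/k sp // in hn.
    rewrite sp ?leq_subr //.
    have := Hmax (tau (n-k) f).
    rewrite (@H_ext _ _ _ Hm set0 (fun s => Lneg (tau (n-k) f s)) (tau k.+1 (fun s => Lneg (f s)))); last first.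
      move=> s; apply: val_inj; rewrite /tau /Lneg (inordK (n' := n)); last by have := ordle (f s); lia.
      have := ordle (f s).
      case: ifP => a; case: ifP => b /=; rewrite inordK //; lia.
    set x := H set0 _.
    move: hn; rewrite eqLone1 -leqNgt leqn0 => /eqP h0.
    rewrite /Lneg inordK h0 //= => h1.
    by rewrite eqLone1.
  split.
    move=> C1 C2 f g dis.
    set a := liftEF n H C1 f; set b := liftEF n H C2 g.
    have hab : minn a b <= n by have := le C1 f; rewrite -/a; lia.
    rewrite /Lmin inordK; last by lia.
    have ha : H C1 (tau (minn a b) f) == Lone by rewrite -sp // geq_minl.
    have hb : H C2 (tau (minn a b) g) == Lone by rewrite -sp // geq_minr.
    rewrite sp //.
    have := Hsup C1 C2 (tau (minn a b) f) (tau (minn a b) g) dis.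
    rewrite (eqP ha) (eqP hb).
    rewrite (@H_ext _ _ _ Hm (C1 :|: C2) _ (tau (minn a b) (fun s => Lmin (f s) (g s)))); last first.
      move=> s; apply: val_inj; rewrite /tau /Lmin (inordK (n' := n)); last by have := ordle (f s); lia.
      have := ordle (f s); have := ordle (g s).
      case: ifP => u; case: ifP => v; case: ifP => w /=; rewrite inordK //; lia.
    by move=> h; rewrite eqLone1; apply: leq_trans h; rewrite /Lmin inordK.
  split.
    move=> C f; split; apply: val_inj => /=.
      rewrite [in RHS]/Loplus inordK; last by lia.
      apply: (@eq_from_le n) => //; first by lia.
      move=> i hi.
      rewrite (kk n C f (fun s => Loplus (f s) (f s)) i ((i+1)%/2)) //; first (apply/idP/idP; lia).
        lia.
      move=> s; rewrite /Loplus inordK; last lia.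
      have hfs := ordle (f s); apply/idP/idP => ?; lia.
    rewrite [in RHS]/Lodot inordK; last by have := le C f; lia.
    apply: (@eq_from_le n) => //; first by have := le C f; lia.
    move=> [|i] hi //.
    rewrite (kk n C f (fun s => Lodot (f s) (f s)) i.+1 ((i+n+2)%/2)) //; first (apply/idP/idP; lia).
      lia.
    move=> s; rewrite /Lodot inordK; last (have := ordle (f s); lia).
    have hfs := ordle (f s); apply/idP/idP => ?; lia.
  split.
    move=> C; apply: val_inj => /=; apply/eqP; rewrite eqn_leq le /= sp //.
    rewrite (@H_ext _ _ _ Hm C _ (fun _ => Lone)); first by rewrite Hl.
    by move=> s; rewrite /tau leqnn.
  move=> C; apply: val_inj => /=; apply/eqP; rewrite -leqn0 leqNgt; apply/negP.
  rewrite sp //.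
  rewrite (@H_ext _ _ _ Hm C _ (fun _ => Lzero)); first by rewrite Hs.
  by move=> s; rewrite /tau.
split; first exact PL.
split.
  move=> C f.
  have e : forall i, 1 <= i <= n -> H C (tau i (fun s => emb1 n (f s))) = H C f.
    move=> i /andP [i1 i2]; apply: (@H_ext _ _ _ Hm) => s; apply: val_inj.
    rewrite /tau /emb1; case: (f s) => [[|[|k]] hk] //=; case: ifP => /=; lia.
  case hH: (H C f == Lone).
    rewrite (eqP hH) /emb1 /=; apply: val_inj; apply/eqP; rewrite eqn_leq le sp // e ?hH //.
    by rewrite n1 leqnn.
  have h1 : ((H C f : nat) == 1) = false.
    move: hH; rewrite eqLone1; case: (L1_cases (H C f)) => -> //.
  rewrite /emb1 h1; apply: val_inj; apply/eqP; rewrite -leqn0 leqNgt sp // e ?hH //.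
move=> [_ [g hg]]; split; first exact PL.
exists (fun s => emb1 n (g s)) => f.
have eqv : (liftEF n H set0 f = Lone) <-> (H set0 (tau n f) == Lone).
  split => h; first by rewrite -sp // h.
  by apply: val_inj; apply/eqP; rewrite eqn_leq le sp.
rewrite eqv; split.
  move/eqP/hg => hs s; rewrite Lodot_pow_emb; have := hs s.
  rewrite /Lodot_pow /= /emb1 /tau; case: (g s) => [[|[|k]] hk] //=; case: ifP => /=; lia.
move=> h; apply/eqP; apply/hg => s; have := h s.
rewrite Lodot_pow_emb /Lodot_pow /= /emb1 /tau; case: (g s) => [[|[|k]] hk] //=; case: ifP => /=; lia.
Qed.
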